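(* Let $G=(V,E)$ be a finite, simple, connected reflective graph, let $x\sim y$ be adjacent vertices and $z\in V$. Then there exist $x',y'\in B_1(z)$ with $x'\sim y'$ and $(x,y)\parallel(x',y')$.
   Context: $d$ is the combinatorial distance and $B_1(z)=\{v: d(v,z)\leq 1\}$. For adjacent $x\sim y$ let $V_x^y=\{v: d(v,x)<d(v,y)\}$, $V^{xy}=\{v:d(v,x)=d(v,y)\}$. A reflection from $x$ to $y$ is a graph automorphism $\phi$ with $\phi\circ\phi=\mathrm{id}$, $\phi(x)=y$, such that the edges between $V_x^y$ and $V_y^x$ are exactly $\{\{x',\phi(x')\}:x'\in V_x^y\}$ and $\phi$ fixes $V^{xy}$ pointwise. $G$ is reflective if every edge admits a reflection. For edges $x\sim y$, $x'\sim y'$ we write $(x,y)\parallel(x',y')$ if $x'\in V_x^y$ and $y'\in V_y^x$. *)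

(* Defs.v *)
From mathcomp Require Import all_boot.
Set Implicit Arguments. Unset Strict Implicit. Unset Printing Implicit Defensive.

(* A finite simple graph: vertex type T : finType, adjacency e : rel T,
   assumed symmetric and irreflexive in the theorem. *)

Definition walkn (T : finType) (e : rel T) (n : nat) (x y : T) : bool :=
  [exists p : n.-tuple T, path e x p && (last x p == y)].

(* combinatorial (shortest-path) distance; for a connected graph every
   distance is < #|T|, so the search over iota 0 #|T| is exhaustive.
   (Returns #|T| if y is unreachable from x.) *)
Definition dist (T : finType) (e : rel T) (x y : T) : nat :=
  find (fun n => walkn e n x y) (iota 0 #|T|).

Definition connected (T : finType) (e : rel T) : Prop :=
  forall x y : T, connect e x y.

Definition ball1 (T : finType) (e : rel T) (z : T) : {set T} :=
  [set v | dist e v z <= 1].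

Definition Vside (T : finType) (e : rel T) (x y : T) : {set T} :=
  [set v | dist e v x < dist e v y].

Definition Vmid (T : finType) (e : rel T) (x y : T) : {set T} :=
  [set v | dist e v x == dist e v y].

Definition is_automorphism (T : finType) (e : rel T) (phi : T -> T) : Prop :=
  bijective phi /\ forall u v, e (phi u) (phi v) = e u v.

Definition reflection (T : finType) (e : rel T) (x y : T) (phi : T -> T) : Prop :=
  [/\ is_automorphism e phi,
      (forall u, phi (phi u) = u),
      phi x = y,
      (* edges between V_x^y and V_y^x are exactly {x', phi x'}, x' in V_x^y *)
      (forall u v, u \in Vside e x y -> v \in Vside e y x ->
          e u v = (v == phi u)) /\
      (forall u, u \in Vside e x y -> phi u \in Vside e y x) &
      (forall v, v \in Vmid e x y -> phi v = v)].

Definition reflective (T : finType) (e : rel T) : Prop :=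
  forall x y, e x y -> exists phi : T -> T, reflection e x y phi.

Definition parallel (T : finType) (e : rel T) (x y x' y' : T) : Prop :=
  x' \in Vside e x y /\ y' \in Vside e y x.

(* Main.v *)
Require Import Defs.
From mathcomp Require Import all_boot.
Set Implicit Arguments. Unset Strict Implicit. Unset Printing Implicit Defensive.

Lemma walkn0 (T : finType) (e : rel T) u v : walkn e 0 u v = (u == v).
Proof.
apply/existsP/idP => [[p /andP[_ /eqP <-]]|/eqP <-].
  by rewrite tuple0.
by exists [tuple]; rewrite /= eqxx.
Qed.

Lemma walknS (T : finType) (e : rel T) n u v :
  walkn e n.+1 u v = [exists w, e u w && walkn e n w v].
Proof.
apply/existsP/existsP => [[p]|[w /andP[euw /existsP[p /andP[pp lp]]]]].
  case/tupleP: p => a p /= /andP[/andP[eua pp] lp].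
  by exists a; rewrite eua; apply/existsP; exists p; rewrite pp.
by exists [tuple of w :: p]; rewrite /= euw pp.
Qed.

Lemma dist_le (T : finType) (e : rel T) n u v : walkn e n u v -> dist e u v <= n.
Proof.
move=> W; rewrite /dist.
case: (ltnP n #|T|) => Hn.
  rewrite leqNgt; apply/negP => /(before_find 0).
  by rewrite nth_iota // add0n W.
by apply: leq_trans (find_size _ _) _; rewrite size_iota.
Qed.

Lemma walk_dist (T : finType) (e : rel T) u v : connect e u v ->
  walkn e (dist e u v) u v /\ dist e u v < #|T|.
Proof.
case/connectP => p pp lp.
case/shortenP: pp lp => q qp uq _ lq.
have Hq : size q < #|T|.
  by have := card_uniqP uq; rewrite /= => <-; apply: max_card.
have W : walkn e (size q) u v.
  by apply/existsP; exists (in_tuple q); rewrite /= qp -lq eqxx.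
have Hh : has (fun n => walkn e n u v) (iota 0 #|T|).
  by apply/hasP; exists (size q) => //; rewrite mem_iota.
split; last by rewrite /dist -{2}(size_iota 0 #|T|) -has_find.
have := nth_find 0 Hh; rewrite nth_iota ?add0n //.
by rewrite -{2}(size_iota 0 #|T|) -has_find.
Qed.

Lemma dist_refl (T : finType) (e : rel T) u : dist e u u = 0.
Proof. by apply/eqP; rewrite -leqn0; apply: (@dist_le _ e 0); rewrite walkn0. Qed.

Lemma dist_edge (T : finType) (e : rel T) u v : e u v -> dist e u v <= 1.
Proof.
move=> H; apply: dist_le; rewrite walknS; apply/existsP; exists v.
by rewrite H walkn0 eqxx.
Qed.

Lemma dist0 (T : finType) (e : rel T) u v : connected e -> dist e u v = 0 -> u = v.
Proof. by move=> /(_ u v) /walk_dist [W _] H; move: W; rewrite H walkn0 => /eqP. Qed.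

Lemma dist1 (T : finType) (e : rel T) u v : connected e -> dist e u v = 1 -> e u v.
Proof.
move=> /(_ u v) /walk_dist [W _] H; move: W; rewrite H walknS.
by case/existsP => w /andP[euw]; rewrite walkn0 => /eqP <-.
Qed.

Lemma dist_tri (T : finType) (e : rel T) u v w : connected e -> e u v ->
  dist e u w <= (dist e v w).+1.
Proof.
move=> /(_ v w) /walk_dist [W _] H; apply: dist_le; rewrite walknS.
by apply/existsP; exists v; rewrite H.
Qed.

Lemma geodesic (T : finType) (e : rel T) u v k : connected e ->
  dist e u v = k.+1 -> exists w, e u w /\ dist e w v = k.
Proof.
move=> C H; have [W _] := walk_dist (C u v).
move: W; rewrite H walknS => /existsP[w /andP[euw Ww]].
exists w; split => //; apply/eqP; rewrite eqn_leq (dist_le Ww) /=.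
by have := @dist_tri _ e u w v C euw; rewrite H.
Qed.

Lemma dist_ge2 (T : finType) (e : rel T) u v : connected e -> u != v ->
  ~~ e u v -> 1 < dist e u v.
Proof.
move=> C uv nuv; case H: (dist e u v) => [|[|n]] //.
  by move: uv; rewrite (dist0 C H) eqxx.
by move: nuv; rewrite (dist1 C H).
Qed.

Lemma refl_edge (T : finType) (e : rel T) x y phi u : reflection e x y phi ->
  u \in Vside e x y -> e u (phi u).
Proof. by case=> _ _ _ [M S] _ H; rewrite M ?eqxx ?S. Qed.

Lemma side_disj (T : finType) (e : rel T) x y u :
  u \in Vside e x y -> u \in Vside e y x -> False.
Proof. by rewrite !inE => H1 H2; move: (ltn_trans H1 H2); rewrite ltnn. Qed.

Lemma mid_side (T : finType) (e : rel T) x y u :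
  u \in Vmid e x y -> u \in Vside e x y -> False.
Proof. by rewrite !inE => /eqP ->; rewrite ltnn. Qed.

Lemma mid_nb (T : finType) (e : rel T)
  (esym : symmetric e) (eirr : irreflexive e)
  (hconn : connected e) (hrefl : reflective e)
  (x y : T) (hxy : e x y) phi (hphi : reflection e x y phi) :
  forall n k z, k <= n -> dist e z x = k -> z \in Vmid e x y ->
  exists c, e z c && (c \in Vside e x y).
Proof.
have [[_ Aut] Inv Pxy [M S] Fix] := hphi.
elim=> [|n IH] k z; move=> Hk Hd Hz.
  move: Hk; rewrite leqn0 => /eqP Hk; rewrite Hk in Hd.
  have zx := dist0 hconn Hd; subst z.
  move: Hz; rewrite inE Hd eq_sym => /eqP /(dist0 hconn) xy; by rewrite xy eirr in hxy.
case: k Hk Hd => [|k] Hk Hd; first by apply: (IH 0).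
have [w [ezw Hw]] := geodesic hconn Hd.
have Hwy : k <= dist e w y.
  have := dist_tri y hconn ezw; move: Hz; rewrite inE => /eqP <-.
  by rewrite Hd.
case: (ltnP k (dist e w y)) => Hk2.
  by exists w; rewrite ezw inE Hw.
have wmid : w \in Vmid e x y by rewrite inE Hw eqn_leq Hk2 Hwy.
have [a /andP[ewa aS]] := IH k w Hk Hw wmid.
case: (boolP [exists c, e z c && (c \in Vside e x y)]) => [/existsP //|/existsPn Hno].
exfalso.
set b := phi a.
have bS : b \in Vside e y x by apply: S.
have eab : e a b by apply: (refl_edge hphi).
have ewb : e w b by rewrite -(Fix w wmid) /b Aut.
have az : a != z by apply/eqP => az; subst a; apply: (mid_side Hz aS).
have bz : b != z.
  by apply/eqP => bz; move: Hz bS; rewrite -bz !inE => /eqP ->; rewrite ltnn.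
have nza : ~~ e z a by have := Hno a; rewrite aS andbT.
have nzb : ~~ e z b.
  by rewrite -Aut (Fix z Hz) /b Inv.
have aW : a \in Vside e w z.
  have eaw : e a w by rewrite esym.
  rewrite inE; apply: (leq_ltn_trans (dist_edge eaw)).
  by apply: dist_ge2 => //; rewrite esym.
have bW : b \in Vside e w z.
  have ebw : e b w by rewrite esym.
  rewrite inE; apply: (leq_ltn_trans (dist_edge ebw)).
  by apply: dist_ge2 => //; rewrite esym.
have [psi Hpsi] := hrefl w z (etrans (esym w z) ezw).
have [[_ Aut'] Inv' Pwz [M' S'] _] := Hpsi.
set c := psi a.
have cW : c \in Vside e z w by apply: S'.
have eac : e a c by apply: (refl_edge Hpsi).
have ezc : e z c by rewrite -Pwz /c Aut'.
have cnS : c \notin Vside e x y by have := Hno c; rewrite ezc.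
have cnS2 : c \notin Vside e y x.
  apply/negP => cS; have := M a c aS cS; rewrite eac => h; have cb : c = b by apply/eqP; rewrite -h.
  by rewrite cb in cW; apply: (side_disj bW cW).
have cmid : c \in Vmid e x y.
  by move: cnS cnS2; rewrite !inE -!leqNgt => h1 h2; rewrite eqn_leq h1 h2.
have ecb : e c b.
  by rewrite /b -(Fix c cmid) Aut esym.
have := M' b c bW cW; rewrite esym ecb => h; have cpb : c = psi b by apply/eqP; rewrite -h.
have ab : a = b by rewrite -(Inv' a) -(Inv' b) -cpb.
by rewrite -ab eirr in eab.
Qed.

Theorem lemma2p4 (T : finType) (e : rel T)
  (esym : symmetric e) (eirr : irreflexive e)
  (hconn : connected e) (hrefl : reflective e)
  (x y z : T) (hxy : e x y) :
  exists x' y' : T,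
    [/\ x' \in ball1 e z, y' \in ball1 e z, e x' y' & parallel e x y x' y'].
Proof.
have [phi hphi] := hrefl x y hxy.
have [[_ Aut] Inv Pxy [M S] Fix] := hphi.
case: (boolP (z \in Vside e x y)) => zS.
  exists z, (phi z); have ezp := refl_edge hphi zS.
  split => //; rewrite ?inE ?dist_refl //.
    by apply: dist_edge; rewrite esym.
  by split => //; apply: S.
have eyx : e y x by rewrite esym.
have [psi hpsi] := hrefl y x eyx.
have [[_ Aut'] Inv' Pyx [M' S'] Fix'] := hpsi.
case: (boolP (z \in Vside e y x)) => zS2.
  exists (psi z), z; have ezp := refl_edge hpsi zS2.
  have epz : e (psi z) z by rewrite esym.
  split => //; rewrite ?inE ?dist_refl //; first exact: dist_edge.
  by split => //; apply: S'.
have zmid : z \in Vmid e x y.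
  by move: zS zS2; rewrite !inE -!leqNgt => h1 h2; rewrite eqn_leq h1 h2.
have [c /andP[ezc cS]] := mid_nb esym eirr hconn hrefl hxy hphi (leqnn _) (erefl _) zmid.
have ecp := refl_edge hphi cS.
exists c, (phi c); split => //; rewrite ?inE.
- by apply: dist_edge; rewrite esym.
- by apply: dist_edge; rewrite -(Fix z zmid) Aut esym.
- by split => //; apply: S.
Qed.
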